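(* Let $P\subset\mathbb R^d$ be a rational $d$-polytope with irredundant presentation $P=\bigcap_{i=1}^m H^{\ge}_{\bm a_i,b_i}$, $(\bm a_i,b_i)\in\mathbb Z^{d+1}$ primitive, and let $\mathcal C_P\subset\mathbb R^{d+1}$ be the cone generated by $\{(\bm x,1):\bm x\in P\}$. For $\bm u,\bm v\in\mathbb R^d$ the following are equivalent: (1) $(\mathcal C_P+(\bm u,0))\cap\mathbb Z^{d+1}=(\mathcal C_P+(\bm v,0))\cap\mathbb Z^{d+1}$; (2) $\lceil(\bm a_i,\bm u)\rceil=\lceil(\bm a_i,\bm v)\rceil$ for all $i=1,\dots,m$ (i.e. $\bm u$ and $\bm v$ lie in the same upper region of $\Lambda_P$).
   Context: $H^{\ge}_{\bm a,b}=\{\bm x\in\mathbb R^d:(\bm a,\bm x)\ge b\}$. For $\bm c\in\mathbb Z^m$, the upper region is $U_{\bm c}=\{\bm x\in\mathbb R^d: c_i-1<(\bm a_i,\bm x)\le c_i \text{ for all } i\}$, and $\Lambda_P$ is the set of upper regions; they partition $\mathbb R^d$. *)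

(* Defs.v *)
From HB Require Import structures.
From mathcomp Require Import all_boot all_order all_algebra.
From mathcomp Require Import reals.
Set Implicit Arguments. Unset Strict Implicit. Unset Printing Implicit Defensive.
Import Order.TTheory GRing.Theory Num.Theory.
Local Open Scope ring_scope.

Section PolytopeDefs.
Variables (R : realType) (d m : nat).
Variables (a : 'I_m -> 'I_d -> int) (b : 'I_m -> int).

Definition ipr (ai : 'I_d -> int) (x : 'rV[R]_d) : R :=
  \sum_(j < d) (ai j)%:~R * x 0 j.

Definition polyP (x : 'rV[R]_d) : Prop := forall i, (b i)%:~R <= ipr (a i) x.

Definition polyP_without (i : 'I_m) (x : 'rV[R]_d) : Prop :=
  forall k, k != i -> (b k)%:~R <= ipr (a k) x.

Definition irredundant : Prop :=
  forall i, exists x, polyP_without i x /\ ~ polyP x.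

Definition primitive_row (i : 'I_m) : Prop :=
  forall k : int, (forall j, (k %| a i j)%Z) -> (k %| b i)%Z -> `|k| = 1.

Definition bounded_P : Prop :=
  exists M : R, forall x, polyP x -> forall j, `|x 0 j| <= M.

Definition full_dim_P : Prop :=
  exists x : 'rV[R]_d, exists e : R, 0 < e /\
    forall y : 'rV[R]_d, \sum_(j < d) (y 0 j - x 0 j) ^+ 2 < e ^+ 2 -> polyP y.

Definition d_polytope : Prop := bounded_P /\ full_dim_P.

(* C_P: the cone generated by {(x,1) : x in P} in R^{d+1} = R^d x R,
   i.e. all finite nonnegative combinations of such points *)
Definition coneP (y : 'rV[R]_d) (t : R) : Prop :=
  exists n : nat, exists c : 'I_n -> R, exists p : 'I_n -> 'rV[R]_d,
    (forall k, 0 <= c k) /\ (forall k, polyP (p k)) /\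
    y = \sum_(k < n) c k *: p k /\ t = \sum_(k < n) c k.

Definition shifted_coneP (u : 'rV[R]_d) (y : 'rV[R]_d) (t : R) : Prop :=
  coneP (y - u) t.

Definition lattice_pt (y : 'rV[R]_d) (t : R) : Prop :=
  (forall j, y 0 j \is a Num.int) /\ t \is a Num.int.

End PolytopeDefs.

(* Main.v *)
Require Import Defs.
From HB Require Import structures.
From mathcomp Require Import all_boot all_order all_algebra.
From mathcomp Require Import reals.
From mathcomp.algebra_tactics Require Import ring lra.
From Stdlib Require Import Classical.
Import Order.TTheory GRing.Theory Num.Theory.
Local Open Scope ring_scope.
Set Implicit Arguments. Unset Strict Implicit.

Lemma ipr_add (R : realType) d (ai : 'I_d -> int) (x y : 'rV[R]_d) :
  ipr ai (x + y) = ipr ai x + ipr ai y.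
Proof. rewrite /ipr -big_split /=; apply: eq_bigr => j _; rewrite mxE; ring. Qed.

Lemma ipr_sub (R : realType) d (ai : 'I_d -> int) (x y : 'rV[R]_d) :
  ipr ai (x - y) = ipr ai x - ipr ai y.
Proof. rewrite /ipr -sumrB /=; apply: eq_bigr => j _; rewrite !mxE; ring. Qed.

Lemma ipr_scale (R : realType) d (ai : 'I_d -> int) c (x : 'rV[R]_d) :
  ipr ai (c *: x) = c * ipr ai x.
Proof. rewrite /ipr mulr_sumr; apply: eq_bigr => j _; rewrite !mxE; ring. Qed.

Lemma ipr_sum (R : realType) d (ai : 'I_d -> int) n (F : 'I_n -> 'rV[R]_d) :
  ipr ai (\sum_(k < n) F k) = \sum_(k < n) ipr ai (F k).
Proof.
rewrite /ipr exchange_big /=; apply: eq_bigr => j _.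
by rewrite summxE mulr_sumr.
Qed.

Lemma ipr0 (R : realType) d (ai : 'I_d -> int) : ipr ai (0 : 'rV[R]_d) = 0.
Proof. by rewrite /ipr big1 // => j _; rewrite mxE mulr0. Qed.

Lemma coneP_char (R : realType) d m (a : 'I_m -> 'I_d -> int) (b : 'I_m -> int)
  (w : 'rV[R]_d) (t : R) :
  coneP a b w t <-> (t = 0 /\ w = 0) \/ (0 < t /\ forall k, (b k)%:~R * t <= ipr (a k) w).
Proof.
split.
- move=> [n [c [p [c0 [pP [-> ->]]]]]].
  have [/eqP t0|tn0] := eqVneq (\sum_(k < n) c k) 0.
    left; split => //; first exact: (eqP t0).
    have cz : forall k, c k = 0.
      by move=> k; exact: (@psumr_eq0P _ _ predT c (fun i _ => c0 i) (eqP t0) k isT).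
    by rewrite big1 // => k _; rewrite cz scale0r.
  right; split; first by rewrite lt0r tn0 sumr_ge0.
  move=> k; rewrite ipr_sum mulr_sumr; apply: ler_sum => l _.
  by rewrite ipr_scale mulrC ler_wpM2l // pP.
- case=> [[-> ->]|[t0 H]].
    by exists 0%N, (fun _ => 0), (fun _ => 0); rewrite !big_ord0; split => //; split => // [[]].
  exists 1%N, (fun _ => t), (fun _ => t^-1 *: w); rewrite !big_ord1.
  split; first by move=> _; apply: ltW.
  split; last by rewrite scalerA mulfV ?gt_eqF // scale1r.
  move=> _ k; rewrite ipr_scale.
  by rewrite ler_pdivlMl // mulrC.
Qed.
Definition Lint d m (a : 'I_m -> 'I_d -> int) (b : 'I_m -> int) (k : 'I_m)
  (p : 'I_d -> int) (q : int) : int := \sum_(j < d) a k j * p j - b k * q.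

Definition rowz (R : realType) d (p : 'I_d -> int) : 'rV[R]_d := \row_j (p j)%:~R.

Lemma Lint_cast (R : realType) d m (a : 'I_m -> 'I_d -> int) b k p q :
  ((Lint a b k p q)%:~R : R) = ipr (a k) (rowz R p) - (b k)%:~R * q%:~R.
Proof.
rewrite /Lint /ipr intrB intrM; congr (_ - _).
rewrite mulrz_sumr; apply: eq_bigr => j _; by rewrite mxE intrM.
Qed.

Lemma Lint_lin d m (a : 'I_m -> 'I_d -> int) b k p p' q q' x y :
  Lint a b k (fun j => x * p j + y * p' j) (x * q + y * q') =
  x * Lint a b k p q + y * Lint a b k p' q'.
Proof.
rewrite /Lint (eq_bigr (fun j => x * (a k j * p j) + y * (a k j * p' j))); last first.
  by move=> j _; ring.
rewrite big_split /= -!mulr_sumr; ring.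
Qed.

Lemma lattice_rowz (R : realType) d (Y : 'I_d -> int) (T : int) :
  lattice_pt (rowz R Y) T%:~R.
Proof. by split; [move=> j; rewrite mxE intr_int | exact: intr_int]. Qed.

Lemma exists_nat (R : realType) (x : R) : exists N : nat, x < (N%:Z)%:~R.
Proof.
exists (Num.bound `|x|); rewrite -pmulrn.
apply: le_lt_trans (ler_norm x) _; exact: archi_boundP.
Qed.

Definition rnd (R : realType) d (M : nat) (x : 'rV[R]_d) : 'I_d -> int :=
  fun j => Num.floor ((M%:Z)%:~R * x 0 j).

Definition Ck (R : realType) d m (a : 'I_m -> 'I_d -> int) k : R :=
  \sum_(j < d) `|((a k j)%:~R : R)|.

Lemma approx (R : realType) d m (a : 'I_m -> 'I_d -> int) b k M (x : 'rV[R]_d) :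
  `|(Lint a b k (rnd M x) M%:Z)%:~R - (M%:Z)%:~R * (ipr (a k) x - (b k)%:~R)| <= Ck R a k.
Proof.
rewrite Lint_cast.
have -> : ipr (a k) (rowz R (rnd M x)) - (b k)%:~R * (M%:Z)%:~R -
    (M%:Z)%:~R * (ipr (a k) x - (b k)%:~R) =
    \sum_(j < d) (a k j)%:~R * (((rnd M x) j)%:~R - (M%:Z)%:~R * x 0 j).
  rewrite [RHS](eq_bigr (fun j => (a k j)%:~R * (rnd M x j)%:~R - (M%:Z)%:~R * ((a k j)%:~R * x 0 j))); last by move=> j _; ring.
  rewrite sumrB -mulr_sumr /ipr /rowz.
  under eq_bigr => j _ do rewrite mxE.
  ring.
apply: le_trans (ler_norm_sum _ _ _) _; apply: ler_sum => j _.
rewrite normrM; apply: ler_piMr => //.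
rewrite ler_norml; have := floor_itv ((M%:Z)%:~R * x 0 j); rewrite intrD /rnd.
move=> /andP [h1 h2]; apply/andP; split; lra.
Qed.
From mathcomp Require Import zify.

Lemma recession (R : realType) d m (a : 'I_m -> 'I_d -> int) b
  (hb : bounded_P R a b) (x1 : 'rV[R]_d) (hx1 : Defs.polyP a b x1) (z : 'rV[R]_d)
  (hz : forall k, 0 <= ipr (a k) z) : z = 0.
Proof.
case: hb => M HM; apply/rowP => j; rewrite mxE.
case: (eqVneq (z 0 j) 0) => // nz; exfalso.
have M0 : `|x1 0 j| <= M by apply: HM.
have zp : 0 < `|z 0 j| by rewrite normr_gt0.
set s := (M + `|x1 0 j| + 1) / `|z 0 j|.
have s0 : 0 <= s by rewrite /s divr_ge0 //; apply: addr_ge0 => //; apply: addr_ge0 => //; apply: le_trans M0.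
have P1 : Defs.polyP a b (x1 + s *: z).
  move=> k; rewrite ipr_add ipr_scale; have := hx1 k; have := hz k.
  move=> h1 h2; have : 0 <= s * ipr (a k) z by apply: mulr_ge0. lra.
have := HM _ P1 j; rewrite !mxE.
have e1 : `|s * z 0 j| = M + `|x1 0 j| + 1.
  by rewrite normrM (ger0_norm s0) /s mulfVK // gt_eqF.
have e2 : `|s * z 0 j| <= `|x1 0 j + s * z 0 j| + `|x1 0 j|.
  rewrite -(normrN (x1 0 j)); apply: le_trans (ler_normD _ _).
  by rewrite addrC addKr.
lra.
Qed.

Lemma x1_in (R : realType) d m (a : 'I_m -> 'I_d -> int) b (x1 : 'rV[R]_d) e :
  0 < e -> (forall y : 'rV[R]_d, \sum_(j < d) (y 0 j - x1 0 j) ^+ 2 < e ^+ 2 -> Defs.polyP a b y) ->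
  Defs.polyP a b x1.
Proof.
move=> e0 H; apply: H; rewrite big1 ?exprn_gt0 // => j _; by rewrite subrr expr0n.
Qed.

Lemma a_nz (R : realType) d m (a : 'I_m -> 'I_d -> int) b (x1 : 'rV[R]_d)
  (hx1 : Defs.polyP a b x1) (hirr : irredundant R a b) k : exists j, a k j != 0.
Proof.
apply: NNPP => H.
have z : forall j, a k j = 0.
  by move=> j; apply/eqP; apply: contra_notT H => h; exists j.
have i0 : forall x : 'rV[R]_d, ipr (a k) x = 0.
  by move=> x; rewrite /ipr big1 // => j _; rewrite z mul0r.
case: (hirr k) => x [Hw Hn]; apply: Hn => k'.
case: (eqVneq k' k) => [->|ne]; last exact: Hw.
by have := hx1 k; rewrite !i0.
Qed.

Lemma strict (R : realType) d m (a : 'I_m -> 'I_d -> int) b (x1 : 'rV[R]_d) e :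
  0 < e -> (forall y : 'rV[R]_d, \sum_(j < d) (y 0 j - x1 0 j) ^+ 2 < e ^+ 2 -> Defs.polyP a b y) ->
  (forall k, exists j, a k j != 0) -> forall k, (b k)%:~R < ipr (a k) x1.
Proof.
move=> e0 H hnz k.
set S := \sum_(j < d) ((a k j)%:~R : R) ^+ 2.
have S0 : 0 < S.
  case: (hnz k) => j nz.
  rewrite /S (bigD1 j) //=; apply: ltr_pwDl; first by rewrite exprn_even_gt0 // intr_eq0.
  by apply: sumr_ge0 => l _; rewrite sqr_ge0.
set eta := e / (S + 1).
have eta0 : 0 < eta by rewrite /eta divr_gt0 //; lra.
have ee : e = eta * (S + 1) by rewrite /eta mulfVK //; lra.
have hy : Defs.polyP a b (x1 - eta *: rowz R (a k)).
  apply: H.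
  have -> : \sum_(j < d) ((x1 - eta *: rowz R (a k)) 0 j - x1 0 j) ^+ 2 = eta ^+ 2 * S.
    rewrite /S mulr_sumr; apply: eq_bigr => j _; rewrite !mxE; ring.
  rewrite ee; nra.
have := hy k; rewrite ipr_sub ipr_scale.
have -> : ipr (a k) (rowz R (a k)) = S.
  by rewrite /ipr /S; apply: eq_bigr => j _; rewrite mxE expr2.
have : 0 < eta * S by apply: mulr_gt0.
lra.
Qed.
Definition ach d m (a : 'I_m -> 'I_d -> int) (b : 'I_m -> int) i (v : int) :=
  exists y t, Lint a b i y t = v.

Lemma ach_comb d m (a : 'I_m -> 'I_d -> int) b i x y u w :
  ach a b i u -> ach a b i w -> ach a b i (x * u + y * w).
Proof.
move=> [p [q <-]] [p' [q' <-]].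
by exists (fun j => x * p j + y * p' j), (x * q + y * q'); rewrite Lint_lin.
Qed.

Lemma ach_a d m (a : 'I_m -> 'I_d -> int) b i j : ach a b i (a i j).
Proof.
exists (fun l => if l == j then 1 else 0), 0; rewrite /Lint mulr0 subr0.
rewrite (bigD1 j) //= eqxx mulr1 big1 ?addr0 // => l /negbTE ->; by rewrite mulr0.
Qed.

Lemma ach_b d m (a : 'I_m -> 'I_d -> int) b i : ach a b i (b i).
Proof.
exists (fun _ => 0), (-1); rewrite /Lint big1 ?sub0r; first by ring.
by move=> l _; rewrite mulr0.
Qed.

Lemma ach_mod d m (a : 'I_m -> 'I_d -> int) b i v e :
  ach a b i v -> ach a b i e -> ach a b i (e %% v)%Z.
Proof.
move=> hv he; have := ach_comb 1 (- (e %/ v)%Z) he hv.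
have -> : 1 * e + - (e %/ v)%Z * v = (e %% v)%Z.
  by rewrite {1}(divz_eq e v); ring.
done.
Qed.

Lemma bezout d m (a : 'I_m -> 'I_d -> int) b i (hprim : primitive_row a b i) :
  ach a b i 1.
Proof.
have main : forall N : nat, forall v : int, 0 < v -> v <= N%:Z -> ach a b i v -> ach a b i 1.
  elim=> [|N IH] v v0 vN hv; first by lia.
  case: (boolP ([forall j, (v %| a i j)%Z] && (v %| b i)%Z)).
    move/andP => [/forallP Ha Hb]; have := hprim v Ha Hb.
    move=> h; have e1 : v = 1 by lia.
    by rewrite -e1.
  have step : forall e, ~~ (v %| e)%Z -> ach a b i e -> ach a b i 1.
    move=> e nd he; apply: (IH (e %% v)%Z); last exact: ach_mod.
    + have := modz_ge0 e (lt0r_neq0 v0).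
      have : (e %% v)%Z != 0 by apply: contra nd => /eqP h; apply/dvdz_mod0P.
      lia.
    + have := ltz_pmod e v0; lia.
  rewrite negb_and => /orP [/forallPn [j Hj] | Hb].
    exact: (step _ Hj (ach_a a b i j)).
  exact: (step _ Hb (ach_b a b i)).
have [e [ne he]] : exists e, e != 0 /\ ach a b i e.
  apply: NNPP => H.
  have za : forall j, a i j = 0.
    move=> j; apply/eqP; apply: contra_notT H => h; exists (a i j); split => //; exact: ach_a.
  have zb : b i = 0.
    apply/eqP; apply: contra_notT H => h; exists (b i); split => //; exact: ach_b.
  have : `|2 : int| = 1 by apply: hprim => [j|]; rewrite ?za ?zb dvdz0.
  by [].
have hn : ach a b i (- e).
  have := ach_comb (-1) 0 he he; by rewrite mul0r addr0 mulN1r.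
case: (ltrP 0 e) => e0.
  by apply: (main `|e|%N e) => //; lia.
apply: (main `|e|%N (- e)) => //; lia.
Qed.
Lemma sum_ge_term (R : realType) n (F : 'I_n -> R) k :
  (forall l, 0 <= F l) -> F k <= \sum_(l < n) F l.
Proof.
move=> h; rewrite (bigD1 k) //= lerDl; exact: sumr_ge0.
Qed.

Lemma facet_pt (R : realType) d m (a : 'I_m -> 'I_d -> int) b
  (hfull : full_dim_P R a b) (hirr : irredundant R a b) i :
  exists p q, 1 <= q /\ Lint a b i p q = 0 /\
    forall k, k != i -> 1 <= Lint a b k p q.
Proof.
case: hfull => x1 [e [e0 He]].
have hx1 := x1_in e0 He.
have hnz := a_nz hx1 hirr.
have hs := strict e0 He hnz.
case: (hirr i) => x0 [Hw Hn].
have hx0i : ipr (a i) x0 < (b i)%:~R.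
  rewrite ltNge; apply/negP => h; apply: Hn => k.
  by case: (eqVneq k i) => [->|ne] //; exact: Hw.
set C := \sum_(k < m) Ck R a k.
have Ck0 : forall k, 0 <= Ck R a k by move=> k; apply: sumr_ge0 => j _.
have CkC : forall k, Ck R a k <= C by move=> k; exact: sum_ge_term.
have C0 : 0 <= C by exact: sumr_ge0.
case: (exists_nat (\sum_(k < m) C / (ipr (a k) x1 - (b k)%:~R))) => M1 HM1.
set p1 := rnd M1 x1.
have L1 : forall k, 0 < Lint a b k p1 M1%:Z.
  move=> k; rewrite -(@ltr0z R).
  have := approx a b k M1 x1; rewrite ler_distl => /andP [h _].
  have dk : 0 < ipr (a k) x1 - (b k)%:~R by have := hs k; lra.
  have t1 : C / (ipr (a k) x1 - (b k)%:~R) < (M1%:Z)%:~R.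
    apply: le_lt_trans HM1; apply: (sum_ge_term (F := fun k => C / (ipr (a k) x1 - (b k)%:~R))).
    by move=> l; apply: divr_ge0 => //; have := hs l; lra.
  move: t1; rewrite ltr_pdivrMr // => t1.
  have := CkC k; lra.
set B := Lint a b i p1 M1%:Z.
have B1 : 1 <= B by have := L1 i; rewrite -/B; lia.
have dx0 : 0 < (b i)%:~R - ipr (a i) x0 by lra.
case: (exists_nat ((B + 1)%:~R * C / ((b i)%:~R - ipr (a i) x0))) => M0 HM0.
set p0 := rnd M0 x0.
set A := - Lint a b i p0 M0%:Z.
have hA : (B%:~R * C) < A%:~R.
  have := approx a b i M0 x0; rewrite ler_distl => /andP [_ h].
  move: HM0; rewrite ltr_pdivrMr // => HM0.
  rewrite /A intrN; move: HM0; rewrite intrD => HM0.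
  have := CkC i; lra.
have A0 : 0 < A.
  rewrite -(@ltr0z R); apply: le_lt_trans hA; apply: mulr_ge0 => //.
  by rewrite ler0z; lia.
have L0 : forall k, k != i -> - C <= (Lint a b k p0 M0%:Z)%:~R.
  move=> k ki; have := approx a b k M0 x0; rewrite ler_distl => /andP [h _].
  have : 0 <= (M0%:Z)%:~R * (ipr (a k) x0 - (b k)%:~R :> R).
    apply: mulr_ge0; first by rewrite ler0z.
    by have := Hw k ki; lra.
  have := CkC k; lra.
have M10 : (0 < M1%:Z)%R.
  rewrite -(@ltr0z R); apply: le_lt_trans HM1; apply: sumr_ge0 => l _.
  by apply: divr_ge0 => //; have := hs l; lra.
exists (fun j => B * p0 j + A * p1 j), (B * M0%:Z + A * M1%:Z).
split; first by nia.
split; first by rewrite Lint_lin /A /B; ring.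
move=> k ki; rewrite Lint_lin.
suff : (0 : R) < (B * Lint a b k p0 M0%:Z + A * Lint a b k p1 M1%:Z)%:~R.
  by rewrite ltr0z; lia.
have := L0 k ki; have := L1 k; rewrite -(@ltr0z R) => h1 h2.
have h1' : (1 : R) <= (Lint a b k p1 M1%:Z)%:~R.
  by rewrite ler1z; move: h1; rewrite ltr0z; lia.
have B1' : (1 : R) <= B%:~R by rewrite ler1z.
have A0' : (0 : R) <= A%:~R by rewrite ler0z; lia.
rewrite intrD !intrM; nra.
Qed.
Lemma construct (R : realType) d m (a : 'I_m -> 'I_d -> int) b
  (hfull : full_dim_P R a b) (hirr : irredundant R a b)
  (hprim : forall i, primitive_row a b i) i (u : 'rV[R]_d) (c : int) :
  exists Y T, 0 < T /\ Lint a b i Y T = c /\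
    forall k, k != i -> ipr (a k) u <= (Lint a b k Y T)%:~R.
Proof.
case: (bezout (hprim i)) => y0 [t0 H0].
case: (facet_pt hfull hirr i) => p [q [q1 [Hq Hk]]].
set K := \sum_(k < m) `|ipr (a k) u - ((c * Lint a b k y0 t0)%:~R : R)| + `|((c * t0)%:~R : R)|.
case: (exists_nat K) => N HN.
have N0 : (0 : R) <= (N%:Z)%:~R by rewrite ler0z.
have Ks : forall k, `|ipr (a k) u - ((c * Lint a b k y0 t0)%:~R : R)| <= K.
  move=> k; apply: le_trans (sum_ge_term (F := fun k => `|ipr (a k) u - ((c * Lint a b k y0 t0)%:~R : R)|) k _) _.
    by move=> l.
  by rewrite lerDl normr_ge0.
have Kt : `|((c * t0)%:~R : R)| <= K.
  by rewrite lerDr; apply: sumr_ge0 => k _.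
exists (fun j => c * y0 j + N%:Z * p j), (c * t0 + N%:Z * q).
split.
  rewrite -(@ltr0z R) intrD [X in _ + X]intrM.
  have q1' : (1 : R) <= q%:~R by rewrite ler1z.
  have := ler_norm (- ((c * t0)%:~R : R)); rewrite normrN => hn.
  nra.
split; first by rewrite Lint_lin H0 Hq; ring.
move=> k ki; rewrite Lint_lin intrD [X in _ + X]intrM.
have h1 : (1 : R) <= (Lint a b k p q)%:~R by rewrite ler1z; exact: Hk.
have := ler_norm (ipr (a k) u - ((c * Lint a b k y0 t0)%:~R : R)) => hn.
have := Ks k => hk.
nra.
Qed.

Lemma int_ipr (R : realType) d m (a : 'I_m -> 'I_d -> int) b k (Y : 'I_d -> int) :
  ipr (a k) (rowz R Y) = (Lint a b k Y 0)%:~R.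
Proof. by rewrite Lint_cast mulr0 subr0. Qed.

Lemma dir1 (R : realType) d m (a : 'I_m -> 'I_d -> int) b
  (hpoly : d_polytope R a b) (u v : 'rV[R]_d)
  (H2 : forall i, Num.ceil (ipr (a i) u) = Num.ceil (ipr (a i) v))
  y t (hl : lattice_pt y t) : shifted_coneP a b u y t -> shifted_coneP a b v y t.
Proof.
case: hl => hy ht.
set Y := fun j => Num.floor (y 0 j).
have ey : y = rowz R Y by apply/rowP => j; rewrite mxE floorK.
rewrite /shifted_coneP !coneP_char.
case=> [[t0 yu]|[tp H]].
  left; split => //.
  have eyu : y = u by apply/eqP; rewrite -subr_eq0 yu.
  suff : u - v = 0 by move=> h; rewrite eyu.
  case: hpoly => hb [x1 [e [e0 He]]].
  apply: (recession hb (x1_in e0 He)) => k.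
  have hu : ipr (a k) u = (Lint a b k Y 0)%:~R by rewrite -eyu ey (int_ipr R a b).
  have hv : ipr (a k) v <= (Lint a b k Y 0)%:~R.
    by apply: le_trans (ceil_ge _) _; rewrite -H2 hu intrKceil.
  rewrite ipr_sub; lra.
right; split => // k; have := H k.
rewrite !ipr_sub => hk.
have e1 : ipr (a k) u <= (Lint a b k Y (Num.floor t))%:~R.
  by rewrite Lint_cast -ey floorK //; lra.
move: e1; rewrite -ceil_le_int H2 -(@ler_int R) => e1.
have := le_trans (ceil_ge _) e1.
by rewrite Lint_cast -ey floorK //; lra.
Qed.

Lemma dir2 (R : realType) d m (a : 'I_m -> 'I_d -> int) b
  (hfull : full_dim_P R a b) (hirr : irredundant R a b)
  (hprim : forall i, primitive_row a b i) (u v : 'rV[R]_d)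
  (H1 : forall (y : 'rV[R]_d) (t : R), lattice_pt y t ->
     shifted_coneP a b u y t -> shifted_coneP a b v y t) i :
  Num.ceil (ipr (a i) v) <= Num.ceil (ipr (a i) u).
Proof.
rewrite leNgt; apply/negP => hlt.
set c := Num.ceil (ipr (a i) u).
case: (construct hfull hirr hprim i u c) => Y [T [T0 [Hi Hk]]].
have hu : shifted_coneP a b u (rowz R Y) T%:~R.
  rewrite /shifted_coneP coneP_char; right; split; first by rewrite ltr0z.
  move=> k; rewrite ipr_sub.
  suff : ipr (a k) u <= (Lint a b k Y T)%:~R by rewrite Lint_cast; lra.
  case: (eqVneq k i) => [->|ki]; last exact: Hk.
  by rewrite Hi; exact: ceil_ge.
have := H1 _ _ (lattice_rowz R Y T) hu.
rewrite /shifted_coneP coneP_char => -[[T00 _]|[_ H]].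
  by move: T0; rewrite -(@ltr0z R) T00 ltxx.
have := H i; rewrite ipr_sub => h.
have : ipr (a i) v <= c%:~R by rewrite -Hi Lint_cast; lra.
by rewrite -ceil_le_int => /(lt_le_trans hlt); rewrite ltxx.
Qed.

Unset Implicit Arguments.

Theorem mainTheorem3 (R : realType) (d m : nat)
    (a : 'I_m -> 'I_d -> int) (b : 'I_m -> int)
    (hpoly : d_polytope R a b)
    (hirr : irredundant R a b)
    (hprim : forall i, primitive_row a b i)
    (u v : 'rV[R]_d) :
  (forall (y : 'rV[R]_d) (t : R), lattice_pt y t ->
     (shifted_coneP a b u y t <-> shifted_coneP a b v y t))
  <->
  (forall i : 'I_m, Num.ceil (ipr (R:=R) (a i) u) = Num.ceil (ipr (R:=R) (a i) v)).
Proof.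
have hfull := proj2 hpoly.
split.
  move=> H1 i; apply/eqP; rewrite eq_le; apply/andP; split.
    apply: (dir2 hfull hirr hprim) => y t hl; exact: (proj2 (H1 y t hl)).
  apply: (dir2 hfull hirr hprim) => y t hl; exact: (proj1 (H1 y t hl)).
move=> H2 y t hl; split.
  exact: (dir1 hpoly H2 hl).
apply: (dir1 hpoly _ hl) => i; exact: esym (H2 i).
Qed.
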